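(* Let $Y=\tilde S\cup\tilde P\subset\mathbb P^5$ be a reducible quartic surface which is the union of a plane $\tilde P$ and a smooth cubic rational normal scroll $\tilde S$ such that $\tilde S\cap\tilde P$ is a line $\tilde L$. Then $Y$ is a (generalized) variety with one apparent double point if and only if $\tilde L^2=0$ on $\tilde S$ (i.e. $\tilde L$ is a line of the ruling of $\tilde S$), and $Y$ is secant defective (no secant line to $Y$ passes through a general point of $\mathbb P^5$) if and only if $\tilde L^2=-1$ on $\tilde S$ (i.e. $\tilde L$ is the directrix line of $\tilde S$).
   Context: An equidimensional reduced scheme $X\subset\mathbb P^{2n+1}$ of dimension $n$ is a (generalized) variety with one apparent double point (OADP) if through a general point of $\mathbb P^{2n+1}$ there passes a unique secant line to $X$, i.e. a unique line cutting $X$ scheme-theoretically in a reduced scheme of length two. A smooth cubic rational normal scroll $S(1,2)\subset\mathbb P^4$ is isomorphic to the blow-up of $\mathbb P^2$ at a point; its lines are the fibers of the ruling (self-intersection $0$) and the directrix (the exceptional curve, self-intersection $-1$). *)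

(* Defs.v *)
From HB Require Import structures.
From mathcomp Require Import all_boot all_order all_algebra all_field.
From mathcomp Require Import mpoly.
Set Implicit Arguments. Unset Strict Implicit. Unset Printing Implicit Defensive.
Import GRing.Theory.
Local Open Scope ring_scope.

(* Points of P^5 are represented by nonzero row vectors of algC^6 (affine
   cone); projective subvarieties by scale-invariant predicates on vectors. *)
Definition vpoly := {mpoly algC[6]}.
Definition evalv (f : vpoly) (x : 'rV[algC]_6) : algC := f.@[fun i => x 0 i].

(* Standard smooth cubic scroll S(1,2) in P^4: points
   [a l : b l : a^2 m : a b m : b^2 m]. *)
Definition scroll_pt (a b l m : algC) : 'rV[algC]_5 :=
  \row_(j < 5) nth 0 [:: a * l; b * l; a ^+ 2 * m; a * b * m; b ^+ 2 * m] j.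

(* Cone over the image of S(1,2) under the linear embedding P^4 -> P^5 given
   by A (A row_free). *)
Definition on_scroll (A : 'M[algC]_(5, 6)) (x : 'rV[algC]_6) : Prop :=
  exists a b l m, x = scroll_pt a b l m *m A.

Definition is_ruling_line (A : 'M[algC]_(5, 6)) (C : 'M[algC]_(2, 6)) : Prop :=
  exists a b : algC, (a != 0 \/ b != 0) /\
    (C == col_mx (scroll_pt a b 1 0 *m A) (scroll_pt a b 0 1 *m A))%MS.

Definition is_directrix (A : 'M[algC]_(5, 6)) (C : 'M[algC]_(2, 6)) : Prop :=
  (C == col_mx (scroll_pt 1 0 1 0 *m A) (scroll_pt 0 1 1 0 *m A))%MS.

Definition vanishes_on (Y : 'rV[algC]_6 -> Prop) (f : vpoly) : Prop :=
  forall x, Y x -> evalv f x = 0.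

Definition restrict_line (f : vpoly) (q w : 'rV[algC]_6) : {poly algC} :=
  (map_mpoly (@polyC algC) f).@[fun i => (q 0 i)%:P + (w 0 i) *: 'X].

(* A secant line: a projective line (row space of a rank 2 matrix M) cutting Y
   scheme-theoretically in a reduced scheme of length two: set-theoretically
   exactly two distinct points q1, q2, and at each of them the intersection
   scheme is reduced, i.e. some equation of Y restricts to the line with a
   simple zero there. *)
Definition secant_line (Y : 'rV[algC]_6 -> Prop) (M : 'M[algC]_(2, 6)) : Prop :=
  \rank M = 2%N /\
  exists q1 q2 : 'rV[algC]_6,
    [/\ (q1 <= M)%MS, (q2 <= M)%MS, \rank (col_mx q1 q2) = 2%N, Y q1 & Y q2] /\
    (forall x, (x <= M)%MS -> x != 0 -> Y x ->
       \rank (col_mx x q1) = 1%N \/ \rank (col_mx x q2) = 1%N) /\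
    (exists f, vanishes_on Y f /\ (restrict_line f q1 q2)`_1 != 0) /\
    (exists f, vanishes_on Y f /\ (restrict_line f q2 q1)`_1 != 0).

(* A property holds at a general point of P^5: on a nonempty Zariski open
   subset, complement of the zero locus of a nonzero homogeneous polynomial. *)
Definition general_point (P : 'rV[algC]_6 -> Prop) : Prop :=
  exists g : vpoly, g != 0 /\ (exists d, all (fun m => mdeg m == d) (msupp g)) /\
    forall x : 'rV[algC]_6, x != 0 -> evalv g x != 0 -> P x.

Definition OADP (Y : 'rV[algC]_6 -> Prop) : Prop :=
  general_point (fun x =>
    (exists M, secant_line Y M /\ (x <= M)%MS) /\
    forall M1 M2, secant_line Y M1 -> (x <= M1)%MS ->
                  secant_line Y M2 -> (x <= M2)%MS -> (M1 == M2)%MS).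

Definition secant_defective (Y : 'rV[algC]_6 -> Prop) : Prop :=
  general_point (fun x => forall M, (x <= M)%MS -> ~ secant_line Y M).

Definition scroll_plane_union (A : 'M[algC]_(5, 6)) (B : 'M[algC]_(3, 6))
  (x : 'rV[algC]_6) : Prop := on_scroll A x \/ (x <= B)%MS.

(* Main.v *)
Require Import Defs.
From HB Require Import structures.
From mathcomp Require Import all_boot all_order all_algebra all_field.
From mathcomp Require Import mpoly.
From mathcomp Require Import ring.
From Stdlib Require Import Classical.
Set Implicit Arguments. Unset Strict Implicit. Unset Printing Implicit Defensive.
Import GRing.Theory.
Local Open Scope ring_scope.

Definition linf (v : 'cV[algC]_6) : vpoly := \sum_(i < 6) v i 0 *: 'X_i.

Lemma evalv_linf v x : evalv (linf v) x = (x *m v) 0 0.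
Proof.
rewrite /evalv /linf raddf_sum /= mxE; apply: eq_bigr => i _.
by rewrite mevalZ mevalXU mulrC.
Qed.

Lemma linf_homog v : linf v \is 1.-homog.
Proof.
rewrite /linf; apply: rpred_sum => i _; apply: dhomogZ.
by rewrite dhomogX; apply/eqP; apply: mdeg1.
Qed.

Lemma restrict_linf v q w : restrict_line (linf v) q w =
  ((q *m v) 0 0)%:P + ((w *m v) 0 0) *: 'X.
Proof.
rewrite /restrict_line /linf !mxE [map_mpoly _ _]raddf_sum /= [meval _ _]raddf_sum /=.
rewrite rmorph_sum scaler_suml -big_split /=; apply: eq_bigr => i _.
rewrite map_mpolyZ mevalZ map_mpolyX mevalXU /=.
rewrite mulrDr polyCM mulrC; congr (_ + _); rewrite -mul_polyC mulrA -polyCM mulrC /=.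
by rewrite mulrC mul_polyC (mulrC (v i 0)).
Qed.



Lemma restrict_lineM f g q w : restrict_line (f * g) q w = restrict_line f q w * restrict_line g q w.
Proof. by rewrite /restrict_line rmorphM /= mevalM. Qed.

Lemma evalvM f g x : evalv (f * g) x = evalv f x * evalv g x.
Proof. by rewrite /evalv mevalM. Qed.


Lemma coef1_lin2 (a b c d : algC) :
  ((a%:P + b *: 'X) * (c%:P + d *: 'X))`_1 = a * d + b * c.
Proof.
rewrite coefM !big_ord_recl big_ord0 /= !coefD !coefZ !coefC !coefX /=.
by rewrite !mulr0 !mulr1 !addr0 !add0r mulrC.
Qed.

Definition crd (A : 'M[algC]_(5,6)) (p : 'rV[algC]_6) (x : 'rV[algC]_6) : 'rV[algC]_(5+1) :=
  x *m invmx (col_mx A p).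
Definition ucrd A p x : 'rV[algC]_5 := lsubmx (crd A p x).
Definition tcrd A p x : algC := rsubmx (crd A p x) 0 0.

Lemma crd_decomp A p x : col_mx A p \in unitmx ->
  x = ucrd A p x *m A + tcrd A p x *: p.
Proof.
move=> hT; rewrite /ucrd /tcrd.
have hx : x = crd A p x *m col_mx A p by rewrite /crd mulmxKV.
rewrite {1}hx -{1}[crd A p x]hsubmxK mul_row_col; congr (_ + _).
by rewrite {1}[rsubmx _]mx11_scalar mul_scalar_mx.
Qed.

Lemma crd_uniq A p u t : col_mx A p \in unitmx ->
  ucrd A p (u *m A + t *: p) = u /\ tcrd A p (u *m A + t *: p) = t.
Proof.
move=> hT.
have -> : u *m A + t *: p = row_mx u (t%:M : 'M_1) *m col_mx A p.
  by rewrite mul_row_col mul_scalar_mx.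
by rewrite /ucrd /tcrd /crd mulmxK // row_mxKl row_mxKr mxE eqxx mulr1n.
Qed.

Definition linc A p (phi : 'cV[algC]_5) (k : algC) : vpoly :=
  linf (invmx (col_mx A p) *m col_mx phi (k%:M : 'M_1)).

Lemma evalv_linc A p phi k x :
  evalv (linc A p phi k) x = (ucrd A p x *m phi) 0 0 + tcrd A p x * k.
Proof.
rewrite /linc evalv_linf mulmxA -/(crd A p x) -{1}[crd A p x]hsubmxK mul_row_col.
rewrite mxE [X in _ + X = _]mxE big_ord1 mxE /=.
congr (_ + _); rewrite /tcrd; congr (_ * _); last by rewrite mxE.
Qed.


Lemma poly_nonroot (Q : {poly algC}) : Q != 0 -> exists t, Q.[t] != 0.
Proof.
move=> hQ; apply: NNPP => hn.
have hall : forall t, Q.[t] = 0.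
  by move=> t; apply: NNPP => h; apply: hn; exists t; apply/eqP.
suff [h1 h2] : all (root Q) [seq i%:R | i <- iota 0 (size Q)] /\
   uniq [seq (i%:R : algC) | i <- iota 0 (size Q)].
  by move: (max_poly_roots hQ h1 h2); rewrite size_map size_iota ltnn.
split.
  apply/allP => x /mapP [i _ ->]; apply/rootP.
  exact: hall.
rewrite map_inj_uniq ?iota_uniq // => i j /eqP.
by rewrite Num.Theory.eqr_nat => /eqP.
Qed.

Lemma digits_inj (N : nat) n (f g : 'I_n -> nat) :
  (forall i, f i < N)%N -> (forall i, g i < N)%N ->
  (\sum_(i < n) f i * N ^ i = \sum_(i < n) g i * N ^ i)%N -> f =1 g.
Proof.
elim: n f g => [|n IH] f g hf hg.
  by move=> _ i; case: i.
rewrite !big_ord_recl /= !expn0 !muln1.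
have hN : (0 < N)%N by apply: leq_ltn_trans (hf ord0).
have E h : (\sum_(i < n) h (lift ord0 i) * N ^ (lift ord0 i) =
            N * \sum_(i < n) h (lift ord0 i) * N ^ i)%N.
  rewrite big_distrr /=; apply: eq_bigr => i _.
  by rewrite /= expnS mulnCA.
rewrite !E => heq.
have h0 : f ord0 = g ord0.
  have := congr1 (modn^~ N) heq.
  by rewrite ![(_ + N * _)%N]addnC ![(N * _)%N]mulnC !modnMDl !modn_small.
move: heq; rewrite h0 => /addnI /eqP; rewrite eqn_mul2l.
case/orP => [/eqP hN0|/eqP hs]; first by rewrite hN0 in hN.
have := IH (fun i => f (lift ord0 i)) (fun i => g (lift ord0 i)).
move=> /(_ (fun i => hf _) (fun i => hg _) hs) hrest i.
by case: (unliftP ord0 i) => [j ->|->].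
Qed.

Lemma mpoly_nonvanish n (p : {mpoly algC[n]}) : p != 0 ->
  exists v : 'I_n -> algC, p.@[v] != 0.
Proof.
move=> hp.
pose N := msize p.
pose e (m : 'X_{1..n}) := (\sum_(i < n) m i * N ^ i)%N.
pose Q : {poly algC} := \sum_(m <- msupp p) p@_m *: 'X^(e m).
have hev t : p.@[fun i => t ^+ (N ^ i)] = Q.[t].
  rewrite mevalE /Q horner_sum; apply: eq_bigr => m _.
  rewrite hornerZ hornerXn; congr (_ * _).
  rewrite /e -prodrXr; apply: eq_bigr => i _.
  by rewrite -exprM mulnC.
have hlt m i : m \in msupp p -> (m i < N)%N.
  move=> /msize_mdeg_lt; apply: leq_ltn_trans.
  by rewrite mdegE (bigD1 i) //= leq_addr.
have hQ : Q != 0.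
  set m0 := mlead p.
  have hm0 : m0 \in msupp p by apply: mlead_supp.
  apply/eqP => /(congr1 (fun q : {poly algC} => q`_(e m0))).
  rewrite coef0 /Q coef_sumMXn.
  rewrite big_mkcond (bigD1_seq m0) ?msupp_uniq //= eqxx /= big1_seq.
    rewrite addr0 => h; move: hm0; rewrite mcoeff_msupp h; by rewrite eqxx.
  move=> m /andP [hne hm]; rewrite (negbTE (_ : e m != e m0)) //.
  apply: contra hne => /eqP heq.
  apply/eqP/mnmP; apply: (digits_inj (N := N)) => // i; exact: hlt.
have [t ht] := poly_nonroot hQ.
by exists (fun i => t ^+ (N ^ i)); rewrite hev.
Qed.

Definition cv5 (s : seq algC) : 'cV[algC]_5 := \col_(i < 5) nth 0 s i.

Lemma mul_cv5 (u : 'rV[algC]_5) s : (u *m cv5 s) 0 0 = \sum_(i < 5) u 0 i * nth 0 s i.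
Proof. by rewrite mxE; apply: eq_bigr => i _; rewrite mxE. Qed.

Lemma ucrd_lin A p (a b : algC) x y :
  ucrd A p (a *: x + b *: y) = a *: ucrd A p x + b *: ucrd A p y.
Proof. by rewrite /ucrd /crd mulmxDl -!scalemxAl linearD /= !linearZ. Qed.

Lemma tcrd_lin A p (a b : algC) x y :
  tcrd A p (a *: x + b *: y) = a * tcrd A p x + b * tcrd A p y.
Proof. by rewrite /tcrd /crd mulmxDl -!scalemxAl linearD /= !linearZ /= !mxE. Qed.

Lemma phi_lin (u v : 'rV[algC]_5) (a b : algC) (phi : 'cV[algC]_5) :
  ((a *: u + b *: v) *m phi) 0 0 = a * (u *m phi) 0 0 + b * (v *m phi) 0 0.
Proof. by rewrite mulmxDl -!scalemxAl !mxE. Qed.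

Lemma restrict_linc A p phi k q w : restrict_line (linc A p phi k) q w =
  (evalv (linc A p phi k) q)%:P + (evalv (linc A p phi k) w) *: 'X.
Proof. by rewrite /linc restrict_linf !evalv_linf. Qed.

Lemma linc_homog A p phi k : linc A p phi k \is 1.-homog.
Proof. exact: linf_homog. Qed.

Lemma neq0_point (g : vpoly) x : evalv g x != 0 -> g != 0.
Proof. by apply: contra => /eqP ->; rewrite /evalv meval0. Qed.

Lemma vpoly_nonvanish (g : vpoly) : g != 0 -> exists x, evalv g x != 0.
Proof.
move=> /mpoly_nonvanish [v hv]; exists (\row_i v i).
by rewrite /evalv (meval_eq (v2 := v)) // => i; rewrite mxE.
Qed.

Lemma rank_sub_eq m1 m2 (X : 'M[algC]_(m1, 6)) (Y : 'M[algC]_(m2, 6)) :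
  (X <= Y)%MS -> (\rank Y <= \rank X)%N -> (X == Y)%MS.
Proof.
move=> hXY hr; have [_ <-] := mxrank_leqif_eq hXY.
by rewrite eqn_leq hr mxrankS.
Qed.

Lemma colmx_scal (r : 'rV[algC]_(1 + 1)) (q1 q2 : 'rV[algC]_6) :
  r *m col_mx q1 q2 = r 0 (lshift 1 0) *: q1 + r 0 (rshift 1 0) *: q2.
Proof.
rewrite -{1}[r]hsubmxK mul_row_col [lsubmx r]mx11_scalar [rsubmx r]mx11_scalar.
by rewrite !mul_scalar_mx !mxE.
Qed.

Lemma sub_colmx1 (q1 q2 : 'rV[algC]_6) : (q1 <= col_mx q1 q2)%MS.
Proof. by rewrite -addsmxE addsmxSl. Qed.
Lemma sub_colmx2 (q1 q2 : 'rV[algC]_6) : (q2 <= col_mx q1 q2)%MS.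
Proof. by rewrite -addsmxE addsmxSr. Qed.

Lemma secant_span Y M x : secant_line Y M -> (x <= M)%MS ->
  exists q1 q2 (a b : algC), [/\ Y q1, Y q2, (q1 <= M)%MS, (q2 <= M)%MS &
    x = a *: q1 + b *: q2].
Proof.
move=> [hM [q1 [q2 [[h1 h2 hr Y1 Y2] _]]]] hx.
have hsub : (col_mx q1 q2 <= M)%MS by rewrite col_mx_sub h1 h2.
have /andP [_ hMq] := rank_sub_eq hsub (eq_leq (etrans hM (esym hr))).
have /submxP [r ->] := submx_trans hx hMq.
by exists q1, q2, (r 0 (lshift 1 0)), (r 0 (rshift 1 0)); split => //; rewrite colmx_scal.
Qed.

Lemma rank_col2 (q1 q2 : 'rV[algC]_6) :
  q1 != 0 -> (forall c : algC, q2 != c *: q1) -> \rank (col_mx q1 q2) = 2%N.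
Proof.
move=> h1 h2.
have r1 : \rank q1 = 1%N by rewrite rank_rV h1.
have q2n0 : q2 != 0 by have := h2 0; rewrite scale0r.
have r2 : \rank q2 = 1%N by rewrite rank_rV q2n0.
have := mxrank_sum_cap q1 q2; rewrite r1 r2.
have -> : \rank (q1 + q2)%MS = \rank (col_mx q1 q2) by apply/eqmx_rank/eqmxP; exact: addsmxE.
have hc : \rank (q1 :&: q2)%MS = 0%N.
  have : (\rank (q1 :&: q2)%MS <= \rank q2)%N by apply: mxrankS; apply: capmxSr.
  rewrite r2.
  rewrite leq_eqVlt ltnS leqn0 => /orP [/eqP h|/eqP //].
  have := rank_sub_eq (capmxSr q1 q2) (eq_leq (etrans r2 (esym h))).
  move=> /andP [_ h21]; have : (q2 <= q1)%MS by apply: submx_trans h21 (capmxSl _ _).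
  case/submxP => D hD; exfalso; move: (h2 (D 0 0)); rewrite hD.
  by rewrite [D]mx11_scalar mul_scalar_mx mxE /= eqxx.
by rewrite hc addn0.
Qed.

Lemma rank_col1 (z q : 'rV[algC]_6) (c : algC) :
  z != 0 -> z = c *: q -> \rank (col_mx z q) = 1%N.
Proof.
move=> hz hzq; apply/eqP; rewrite eqn_leq.
have qn0 : q != 0 by apply: contra hz; rewrite hzq => /eqP ->; rewrite scaler0.
have rq : \rank q = 1%N by rewrite rank_rV qn0.
have rz : \rank z = 1%N by rewrite rank_rV hz.
apply/andP; split.
  apply: leq_trans (_ : \rank q <= 1)%N; last by rewrite rq.
  by apply: mxrankS; rewrite col_mx_sub submx_refl andbT hzq scalemx_sub.
apply: leq_trans (_ : \rank z <= _)%N; first by rewrite rz.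
by apply: mxrankS; apply: sub_colmx1.
Qed.

Lemma on_scroll_sub A x : on_scroll A x -> (x <= A)%MS.
Proof. by move=> [a [b [l [m ->]]]]; apply: submxMl. Qed.

Lemma setup (A : 'M[algC]_(5, 6)) (B : 'M[algC]_(3, 6)) (C : 'M[algC]_(2, 6)) :
  row_free A -> \rank B = 3%N -> \rank C = 2%N ->
  \rank (col_mx A B) = 6%N ->
  (forall x : 'rV[algC]_6, (on_scroll A x /\ (x <= B)%MS) <-> (x <= C)%MS) ->
  [/\ (C <= B)%MS, (C <= A)%MS,
      (forall z : 'rV_6, (z <= A)%MS -> (z <= B)%MS -> (z <= C)%MS) &
      exists p : 'rV_6, (p <= B)%MS /\ col_mx A p \in unitmx].
Proof.
move=> hA hB hC hAB hint.
have hrA : \rank A = 5%N by apply/eqP.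
have hrowC i : on_scroll A (row i C) /\ (row i C <= B)%MS.
  by apply/(hint (row i C)); apply: row_sub.
have hCB : (C <= B)%MS by apply/row_subP => i; case: (hrowC i).
have hCA : (C <= A)%MS.
  by apply/row_subP => i; case: (hrowC i) => /on_scroll_sub.
have hsum : \rank (A + B)%MS = 6%N by apply: etrans hAB; apply/eqmx_rank/eqmxP; exact: addsmxE.
have hcap : \rank (A :&: B)%MS = 2%N.
  have := mxrank_sum_cap A B; rewrite hsum hrA hB => /eqP.
  by rewrite -[(5+3)%N]/(6+2)%N eqn_add2l => /eqP.
have hCcap : (C <= A :&: B)%MS by rewrite sub_capmx hCA hCB.
have /andP [_ hcapC] := rank_sub_eq hCcap (eq_leq (etrans hcap (esym hC))).
split => //.
  by move=> z hzA hzB; apply: submx_trans hcapC; rewrite sub_capmx hzA hzB.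
have : ~~ (B <= A)%MS.
  apply/negP => hBA.
  have : (\rank (col_mx A B) <= \rank A)%N by apply: mxrankS; rewrite col_mx_sub submx_refl hBA.
  by rewrite hAB hrA.
case/row_subPn => i hi; exists (row i B); split; first exact: row_sub.
set p := row i B in hi *.
have pn0 : p != 0 by apply: contra hi => /eqP ->; apply: sub0mx.
have rp : \rank p = 1%N by rewrite rank_rV pn0.
have hc : \rank (A :&: p)%MS = 0%N.
  have : (\rank (A :&: p)%MS <= \rank p)%N by apply: mxrankS; apply: capmxSr.
  rewrite rp leq_eqVlt ltnS leqn0 => /orP [/eqP h|/eqP //].
  have := rank_sub_eq (capmxSr A p) (eq_leq (etrans rp (esym h))).
  move=> /andP [_ h21]; exfalso; move/negP: hi; apply.
  exact: submx_trans h21 (capmxSl _ _).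
have := mxrank_sum_cap A p; rewrite hc hrA rp addn0 => hs.
rewrite -row_full_unit /row_full.
have -> : \rank (col_mx A p) = \rank (A + p)%MS by apply/eqmx_rank/eqmxP/eqmx_sym; exact: addsmxE.
by rewrite hs.
Qed.

Lemma plane_coords (A : 'M[algC]_(5, 6)) (B : 'M[algC]_(3, 6)) (C : 'M[algC]_(2, 6))
  (p : 'rV[algC]_6) (F : 'M[algC]_(2, 5)) :
  row_free A -> col_mx A p \in unitmx -> (p <= B)%MS -> (C <= B)%MS ->
  (forall z : 'rV_6, (z <= A)%MS -> (z <= B)%MS -> (z <= C)%MS) ->
  (C == F *m A)%MS ->
  (forall z, (z <= B)%MS -> exists r : 'rV_2, ucrd A p z = r *m F) /\
  (forall (r : 'rV_2) (t : algC), (((r *m F) *m A + t *: p)%R <= B)%MS).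
Proof.
move=> hA hT hpB hCB hcap /andP [hCF hFC]; split.
  move=> z hz.
  have hd := crd_decomp z hT.
  have h1 : (ucrd A p z *m A <= B)%MS.
    have -> : ucrd A p z *m A = z - tcrd A p z *: p by rewrite {2}hd addrK.
    by rewrite addmx_sub // ?scalemx_sub // -scaleN1r scalemx_sub // scalemx_sub.
  have h2 : (ucrd A p z *m A <= F *m A)%MS.
    by apply: submx_trans hCF; apply: hcap => //; apply: submxMl.
  by move: h2; rewrite submxMfree // => /submxP.
move=> r t; apply: addmx_sub; last exact: scalemx_sub.
by apply: submx_trans hCB; apply: submx_trans hFC; rewrite -mulmxA submxMl.
Qed.

Lemma scroll_coords (A : 'M[algC]_(5, 6)) p z : col_mx A p \in unitmx ->
  on_scroll A z -> tcrd A p z = 0 /\ exists a b l m, ucrd A p z = scroll_pt a b l m.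
Proof.
move=> hT [a [b [l [m ->]]]].
have := crd_uniq (scroll_pt a b l m) 0 hT; rewrite scale0r addr0 => [[-> ->]].
by split => //; exists a, b, l, m.
Qed.

Definition r2 (x y : algC) : 'rV[algC]_(1 + 1) := \row_(i < 1 + 1) nth 0 [:: x; y] i.
Definition Fr (a0 b0 : algC) : 'M[algC]_(1 + 1, 5) := col_mx (scroll_pt a0 b0 1 0) (scroll_pt a0 b0 0 1).
Definition Fd : 'M[algC]_(1 + 1, 5) := col_mx (scroll_pt 1 0 1 0) (scroll_pt 0 1 1 0).

Lemma r2_mul (x y : algC) (f1 f2 : 'rV[algC]_5) : r2 x y *m col_mx f1 f2 = x *: f1 + y *: f2.
Proof.
set r := r2 x y; rewrite -{1}[r]hsubmxK mul_row_col [lsubmx r]mx11_scalar [rsubmx r]mx11_scalar.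
by rewrite !mul_scalar_mx !mxE.
Qed.

Lemma prop_vec (a1 b1 x y : algC) : (a1 != 0 \/ b1 != 0) -> a1 * y = b1 * x ->
  exists k, x = k * a1 /\ y = k * b1.
Proof.
move=> [ha|hb] e.
  exists (x / a1); split; first by rewrite divfK.
  by apply/(mulfI ha); rewrite e; field.
exists (y / b1); split; last by rewrite divfK.
by apply/(mulfI hb); rewrite -e; field.
Qed.

Lemma sp_fiber a1 b1 k l m :
  scroll_pt (k * a1) (k * b1) l m = r2 (l * k) (m * k ^+ 2) *m Fr a1 b1.
Proof.
rewrite /Fr r2_mul; apply/rowP => j; rewrite !mxE.
by case: j => [[|[|[|[|[|j]]]]] hj] //=; ring.
Qed.

Lemma sp_directrix a b l : scroll_pt a b l 0 = r2 (a * l) (b * l) *m Fd.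
Proof.
rewrite /Fd r2_mul; apply/rowP => j; rewrite !mxE.
by case: j => [[|[|[|[|[|j]]]]] hj] //=; ring.
Qed.

Lemma sp_entries a1 b1 l1 m1 a2 b2 l2 m2 a b l m :
  scroll_pt a1 b1 l1 m1 + scroll_pt a2 b2 l2 m2 = scroll_pt a b l m ->
  [/\ a1 * l1 + a2 * l2 = a * l, b1 * l1 + b2 * l2 = b * l,
      a1 ^+ 2 * m1 + a2 ^+ 2 * m2 = a ^+ 2 * m,
      a1 * b1 * m1 + a2 * b2 * m2 = a * b * m &
      b1 ^+ 2 * m1 + b2 ^+ 2 * m2 = b ^+ 2 * m].
Proof.
move=> E.
have e k (hk : (k < 5)%N) := congr1 (fun v : 'rV_5 => v 0 (Ordinal hk)) E.
move: (e 0%N isT) (e 1%N isT) (e 2%N isT) (e 3%N isT) (e 4%N isT).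
by rewrite !mxE /= => -> -> -> -> ->.
Qed.

Lemma fiber_case a1 b1 l1 m1 a2 b2 l2 m2 a b l m :
  scroll_pt a1 b1 l1 m1 + scroll_pt a2 b2 l2 m2 = scroll_pt a b l m ->
  m1 != 0 -> (a1 != 0 \/ b1 != 0) ->
  exists x1 y1 x2 y2, scroll_pt a1 b1 l1 m1 = r2 x1 y1 *m Fr a1 b1 /\
                      scroll_pt a2 b2 l2 m2 = r2 x2 y2 *m Fr a1 b1.
Proof.
move=> E hm1 hab1; have [E0 E1 E2 E3 E4] := sp_entries E.
have hs1 : scroll_pt a1 b1 l1 m1 = r2 (l1 * 1) (m1 * 1 ^+ 2) *m Fr a1 b1.
  by rewrite -sp_fiber !mul1r.
case: (classic (m2 != 0 /\ (a2 != 0 \/ b2 != 0))) => [[hm2 hab2]|hno].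
  have key : m1 * m2 * (a1 * b2 - b1 * a2) ^+ 2 = 0.
    have -> : m1 * m2 * (a1 * b2 - b1 * a2) ^+ 2 = (a1 ^+ 2 * m1 + a2 ^+ 2 * m2) * (b1 ^+ 2 * m1 + b2 ^+ 2 * m2) - (a1 * b1 * m1 + a2 * b2 * m2) ^+ 2 by ring.
    rewrite E2 E4 E3; ring.
  move/eqP: key; rewrite mulf_eq0 mulf_eq0 (negbTE hm1) (negbTE hm2) /= expf_eq0 /= subr_eq0.
  move=> /eqP /(prop_vec hab1) [k [-> ->]].
  by exists (l1 * 1), (m1 * 1 ^+ 2), (l2 * k), (m2 * k ^+ 2); split; [exact: hs1 | exact: sp_fiber].
have t2 : a2 ^+ 2 * m2 = 0 /\ a2 * b2 * m2 = 0 /\ b2 ^+ 2 * m2 = 0.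
  case: (eqVneq m2 0) => [->|hm2]; first by rewrite !mulr0.
  have [-> ->] : a2 = 0 /\ b2 = 0.
    case: (eqVneq a2 0) => [ha|ha]; last by exfalso; apply: hno; split; [|left].
    case: (eqVneq b2 0) => [hb|hb]; last by exfalso; apply: hno; split; [|right].
    by [].
  by rewrite !mul0r expr0n /= mul0r.
have [t2a [t2b t2c]] := t2.
rewrite t2a addr0 in E2; rewrite t2b addr0 in E3; rewrite t2c addr0 in E4.
have hd : a * b1 - b * a1 = 0.
  apply/eqP; apply: contraT => hd.
  have h1 : m * a * (a * b1 - b * a1) = 0.
    have -> : m * a * (a * b1 - b * a1) = (a ^+ 2 * m) * b1 - (a * b * m) * a1 by ring.
    by rewrite -E2 -E3; ring.
  have h2 : m * b * (a * b1 - b * a1) = 0.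
    have -> : m * b * (a * b1 - b * a1) = (a * b * m) * b1 - (b ^+ 2 * m) * a1 by ring.
    by rewrite -E3 -E4; ring.
  move/eqP: h1; rewrite !mulf_eq0 (negbTE hd) orbF => h1.
  move/eqP: h2; rewrite !mulf_eq0 (negbTE hd) orbF => h2.
  have z2 : a ^+ 2 * m = 0.
    by case/orP: h1 => /eqP ->; rewrite ?mulr0 // expr0n /= mul0r.
  have z4 : b ^+ 2 * m = 0.
    by case/orP: h2 => /eqP ->; rewrite ?mulr0 // expr0n /= mul0r.
  rewrite z2 in E2; rewrite z4 in E4.
  move/eqP: E2; rewrite mulf_eq0 (negbTE hm1) orbF expf_eq0 /= => /eqP ha1.
  move/eqP: E4; rewrite mulf_eq0 (negbTE hm1) orbF expf_eq0 /= => /eqP hb1.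
  by case: hab1; rewrite ?ha1 ?hb1 eqxx.
have : a1 * (b2 * l2) = b1 * (a2 * l2).
  apply/eqP; rewrite -subr_eq0.
  have -> : a1 * (b2 * l2) - b1 * (a2 * l2) = a1 * (b2 * l2 + b1 * l1) - b1 * (a2 * l2 + a1 * l1) by ring.
  rewrite [b2 * l2 + _]addrC E1 [a2 * l2 + _]addrC E0.
  have -> : a1 * (b * l) - b1 * (a * l) = - l * (a * b1 - b * a1) by ring.
  by rewrite hd mulr0.
move=> /(prop_vec hab1) [k [hk1 hk2]].
exists (l1 * 1), (m1 * 1 ^+ 2), k, 0; split => //.
rewrite /Fr r2_mul scale0r addr0; apply/rowP => j; rewrite !mxE.
case: j => [[|[|[|[|[|j]]]]] hj] //=.
- by rewrite mulrA hk1 mulr1.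
- by rewrite mulrA hk2 mulr1.
- by rewrite t2a !mulr0.
- by rewrite t2b !mulr0.
- by rewrite t2c !mulr0.
Qed.

Lemma C_eq (A : 'M[algC]_(5, 6)) (C : 'M[algC]_(2, 6)) (F : 'M[algC]_(1 + 1, 5))
  (r r' : 'rV[algC]_(1 + 1)) :
  \rank C = 2%N -> row 0 C = (r *m F) *m A -> row 1 C = (r' *m F) *m A ->
  (C == F *m A)%MS.
Proof.
move=> hC h0 h1; apply: rank_sub_eq; last by rewrite hC rank_leq_row.
apply/row_subP => i.
have : (i == 0) || (i == 1) by case: i => [[|[|]]].
by case/orP => /eqP ->; rewrite ?h0 ?h1 -mulmxA submxMl.
Qed.

Lemma tail0 a b l m : ~ (m != 0 /\ (a != 0 \/ b != 0)) ->
  scroll_pt a b l m = scroll_pt a b l 0.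
Proof.
move=> hno; case: (eqVneq m 0) => [->|hm] //.
have [-> ->] : a = 0 /\ b = 0.
  case: (eqVneq a 0) => [ha|ha]; last by exfalso; apply: hno; split; [|left].
  case: (eqVneq b 0) => [hb|hb]; last by exfalso; apply: hno; split; [|right].
  by [].
apply/rowP => j; rewrite !mxE.
by case: j => [[|[|[|[|[|j]]]]] hj] //=; ring.
Qed.

Lemma classify (A : 'M[algC]_(5, 6)) (C : 'M[algC]_(2, 6)) :
  row_free A -> \rank C = 2%N -> (forall x, (x <= C)%MS -> on_scroll A x) ->
  is_ruling_line A C \/ is_directrix A C.
Proof.
move=> hA hC hsc.
have [a1 [b1 [l1 [m1 e1]]]] := hsc _ (row_sub 0 C).
have [a2 [b2 [l2 [m2 e2]]]] := hsc _ (row_sub 1 C).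
have [a [b [l [m e]]]] := hsc (row 0 C + row 1 C) (addmx_sub (row_sub 0 C) (row_sub 1 C)).
have E : scroll_pt a1 b1 l1 m1 + scroll_pt a2 b2 l2 m2 = scroll_pt a b l m.
  by apply: (row_free_inj hA); rewrite mulmxDl -e1 -e2 -e.
have ruling a0 b0 : (a0 != 0 \/ b0 != 0) -> (C == Fr a0 b0 *m A)%MS -> is_ruling_line A C.
  by move=> hab hCF; exists a0, b0; split => //; rewrite /Fr mul_col_mx in hCF.
case: (classic (m1 != 0 /\ (a1 != 0 \/ b1 != 0))) => [[hm1 hab1]|hno1].
  have [x1 [y1 [x2 [y2 [h1 h2]]]]] := fiber_case E hm1 hab1.
  left; apply: (ruling a1 b1 hab1).
  by apply: (C_eq (r := r2 x1 y1) (r' := r2 x2 y2)) => //; rewrite ?e1 ?e2 ?h1 ?h2.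
case: (classic (m2 != 0 /\ (a2 != 0 \/ b2 != 0))) => [[hm2 hab2]|hno2].
  rewrite addrC in E.
  have [x2 [y2 [x1 [y1 [h2 h1]]]]] := fiber_case E hm2 hab2.
  left; apply: (ruling a2 b2 hab2).
  by apply: (C_eq (r := r2 x1 y1) (r' := r2 x2 y2)) => //; rewrite ?e1 ?e2 ?h1 ?h2.
right; rewrite /is_directrix -mul_col_mx.
apply: (C_eq (r := r2 (a1 * l1) (b1 * l1)) (r' := r2 (a2 * l2) (b2 * l2))) => //.
  by rewrite e1 (tail0 _ hno1) sp_directrix.
by rewrite e2 (tail0 _ hno2) sp_directrix.
Qed.

Lemma r2_eta (r : 'rV[algC]_(1 + 1)) : r = r2 (r 0 0) (r 0 1).
Proof. by apply/rowP => j; rewrite !mxE; case: j => [[|[|]]] //= hj; congr (r 0 _); apply: val_inj. Qed.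

Lemma evalv_lincE A p s k x :
  evalv (linc A p (cv5 s) k) x = \sum_(i < 5) ucrd A p x 0 i * nth 0 s i + tcrd A p x * k.
Proof. by rewrite evalv_linc mul_cv5. Qed.

Lemma homog_all (g : vpoly) d : g \is d.-homog -> exists d, all (fun m => mdeg m == d) (msupp g).
Proof. by rewrite dhomogE => h; exists d. Qed.

Lemma evalvB f g x : evalv (f - g) x = evalv f x - evalv g x.
Proof. by rewrite /evalv mevalB. Qed.

Definition o0 : 'I_5 := Ordinal (isT : (0 < 5)%N).
Definition o1 : 'I_5 := Ordinal (isT : (1 < 5)%N).
Definition o2 : 'I_5 := Ordinal (isT : (2 < 5)%N).
Definition o3 : 'I_5 := Ordinal (isT : (3 < 5)%N).
Definition o4 : 'I_5 := Ordinal (isT : (4 < 5)%N).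

Lemma evalv_lin5 A p s0 s1 s2 s3 s4 k x :
  evalv (linc A p (cv5 [:: s0; s1; s2; s3; s4]) k) x =
  ucrd A p x 0 o0 * s0 + ucrd A p x 0 o1 * s1 + ucrd A p x 0 o2 * s2 +
  ucrd A p x 0 o3 * s3 + ucrd A p x 0 o4 * s4 + tcrd A p x * k.
Proof.
rewrite evalv_lincE !big_ord_recl big_ord0 /= addr0 !addrA.
by congr (_ + _ + _ + _ + _ + _); congr (_ * _); congr (ucrd A p x 0 _); apply: val_inj.
Qed.

Lemma evalv_t A p x : evalv (linc A p 0 1) x = tcrd A p x.
Proof. by rewrite evalv_linc mulmx0 mxE mulr1 add0r. Qed.

Lemma directrix_defective (A : 'M[algC]_(5, 6)) (B : 'M[algC]_(3, 6)) (p : 'rV[algC]_6) :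
  col_mx A p \in unitmx ->
  (forall z, (z <= B)%MS -> exists r : 'rV_(1 + 1), ucrd A p z = r *m Fd) ->
  secant_defective (scroll_plane_union A B).
Proof.
move=> hT hBF.
pose Lt := linc A p 0 1.
pose U2 := linc A p (cv5 [:: 0; 0; 1; 0; 0]) 0.
pose U3 := linc A p (cv5 [:: 0; 0; 0; 1; 0]) 0.
pose U4 := linc A p (cv5 [:: 0; 0; 0; 0; 1]) 0.
pose g := Lt * U2 * (U2 * U4 - U3 * U3).
have eg x : evalv g x = tcrd A p x * ucrd A p x 0 o2 *
   (ucrd A p x 0 o2 * ucrd A p x 0 o4 - ucrd A p x 0 o3 * ucrd A p x 0 o3).
  rewrite /g !evalvM evalvB !evalvM evalv_t !evalv_lin5; ring.
exists g; split; [|split].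
- pose u0 : 'rV[algC]_5 := \row_(i < 5) nth 0 [:: 0; 0; 1; 0; 1] i.
  apply: (@neq0_point _ (u0 *m A + 1 *: p)).
  have [hu ht] := crd_uniq u0 1 hT.
  by rewrite eg hu ht !mxE /= !mul1r mulr0 subr0 oner_eq0.
- exists 4%N; rewrite -dhomogE.
  apply: (@dhomogM _ _ _ 2 _ 2); first exact: (@dhomogM _ _ _ 1 _ 1 _ (linc_homog _ _ _ _) (linc_homog _ _ _ _)).
  by apply: rpredB; apply: (@dhomogM _ _ _ 1 _ 1); apply: linc_homog.
move=> x _ hg M hxM hsec.
move: hg; rewrite eg !mulf_eq0 !negb_or => /andP [/andP [ht hu2] hQ].
have [q1 [q2 [al [be [Y1 Y2 _ _ hx]]]]] := secant_span hsec hxM.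
have hu : ucrd A p x = al *: ucrd A p q1 + be *: ucrd A p q2 by rewrite hx ucrd_lin.
have htx : tcrd A p x = al * tcrd A p q1 + be * tcrd A p q2 by rewrite hx tcrd_lin.
case: Y1 => [S1|P1]; case: Y2 => [S2|P2].
- have [t1 _] := scroll_coords hT S1; have [t2 _] := scroll_coords hT S2.
  by move: ht; rewrite htx t1 t2 !mulr0 addr0 eqxx.
- have [_ [a [b [l [m e1]]]]] := scroll_coords hT S1.
  have [r e2] := hBF _ P2.
  move: hQ; rewrite hu e1 e2 (r2_eta r) /Fd r2_mul !mxE /=.
  by apply/negP; rewrite negbK; apply/eqP; ring.
- have [_ [a [b [l [m e2]]]]] := scroll_coords hT S2.
  have [r e1] := hBF _ P1.
  move: hQ; rewrite hu e1 e2 (r2_eta r) /Fd r2_mul !mxE /=.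
  by apply/negP; rewrite negbK; apply/eqP; ring.
- have [r1 e1] := hBF _ P1; have [r2' e2] := hBF _ P2.
  move: hu2; rewrite hu e1 e2 (r2_eta r1) (r2_eta r2') /Fd !r2_mul !mxE /=.
  by apply/negP; rewrite negbK; apply/eqP; ring.
Qed.

Definition W1 (a0 b0 : algC) (u : 'rV[algC]_5) := b0 * u 0 o0 - a0 * u 0 o1.
Definition W2 (a0 b0 : algC) (u : 'rV[algC]_5) := b0 * u 0 o2 - a0 * u 0 o3.
Definition W3 (a0 b0 : algC) (u : 'rV[algC]_5) := b0 * u 0 o3 - a0 * u 0 o4.
Definition DW (a0 b0 : algC) (u : 'rV[algC]_5) := b0 * W2 a0 b0 u - a0 * W3 a0 b0 u.
Definition SU (a0 b0 : algC) (u : 'rV[algC]_5) :=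
  scroll_pt (W2 a0 b0 u) (W3 a0 b0 u) (W1 a0 b0 u / DW a0 b0 u) (1 / DW a0 b0 u).

Lemma kernelF a0 b0 (v : 'rV[algC]_5) : (a0 != 0 \/ b0 != 0) ->
  W1 a0 b0 v = 0 -> W2 a0 b0 v = 0 -> W3 a0 b0 v = 0 ->
  exists r : 'rV_(1 + 1), v = r *m Fr a0 b0.
Proof.
rewrite /W1 /W2 /W3 => hab /eqP h1 /eqP h2 /eqP h3.
move: h1 h2 h3; rewrite !subr_eq0 => /eqP h1 /eqP h2 /eqP h3.
have [k [k1 k2]] := prop_vec hab (esym h1).
have [k' [k'1 k'2]] := prop_vec hab (esym h2).
have [k'' [k''1 k''2]] := prop_vec hab (esym h3).
have : a0 * k'' = b0 * k' by rewrite mulrC -k''1 k'2 mulrC.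
move=> /(prop_vec hab) [c [c1 c2]].
exists (r2 k c); rewrite /Fr r2_mul; apply/rowP => j; rewrite !mxE.
case: j => [[|[|[|[|[|j]]]]] hj] //=.
- rewrite (_ : v 0 _ = v 0 o0); last by congr (v 0 _); exact: val_inj.
  rewrite k1; ring.
- rewrite (_ : v 0 _ = v 0 o1); last by congr (v 0 _); exact: val_inj.
  rewrite k2; ring.
- rewrite (_ : v 0 _ = v 0 o2); last by congr (v 0 _); exact: val_inj.
  rewrite k'1 c1; ring.
- rewrite (_ : v 0 _ = v 0 o3); last by congr (v 0 _); exact: val_inj.
  rewrite k'2 c1; ring.
- rewrite (_ : v 0 _ = v 0 o4); last by congr (v 0 _); exact: val_inj.
  rewrite k''2 c2; ring.
Qed.

Lemma W_SU a0 b0 (u : 'rV[algC]_5) : DW a0 b0 u != 0 ->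
  [/\ W1 a0 b0 (SU a0 b0 u) = W1 a0 b0 u, W2 a0 b0 (SU a0 b0 u) = W2 a0 b0 u &
      W3 a0 b0 (SU a0 b0 u) = W3 a0 b0 u].
Proof.
rewrite /SU /DW.
set w1 := W1 a0 b0 u; set w2 := W2 a0 b0 u; set w3 := W3 a0 b0 u => hd.
rewrite /W1 /W2 /W3 !mxE /=.
by split; field.
Qed.

Lemma sp_scale a0 b0 (al a b l m : algC) :
  let d := b0 * a - a0 * b in
  let w1 := al * l * d in let w2 := al * m * a * d in let w3 := al * m * b * d in
  b0 * w2 - a0 * w3 != 0 ->
  scroll_pt w2 w3 (w1 / (b0 * w2 - a0 * w3)) (1 / (b0 * w2 - a0 * w3)) = al *: scroll_pt a b l m.
Proof.
move=> d w1 w2 w3 hd.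
have e : b0 * w2 - a0 * w3 = al * m * d ^+ 2 by rewrite /w2 /w3 /d; ring.
rewrite e in hd *.
move: hd; rewrite mulf_eq0 negb_or expf_eq0 /= mulf_eq0 negb_or => /andP [/andP [hal hm] hd'].
rewrite /w1 /w2 /w3; apply/rowP => j; rewrite !mxE.
by case: j => [[|[|[|[|[|j]]]]] hj] //=; field; rewrite ?hal ?hm ?hd'.
Qed.

Lemma W_lin a0 b0 (al be : algC) (u v : 'rV[algC]_5) :
  [/\ W1 a0 b0 (al *: u + be *: v) = al * W1 a0 b0 u + be * W1 a0 b0 v,
      W2 a0 b0 (al *: u + be *: v) = al * W2 a0 b0 u + be * W2 a0 b0 v &
      W3 a0 b0 (al *: u + be *: v) = al * W3 a0 b0 u + be * W3 a0 b0 v].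
Proof. by rewrite /W1 /W2 /W3 !mxE; split; ring. Qed.

Lemma W_sp a0 b0 a b l m :
  [/\ W1 a0 b0 (scroll_pt a b l m) = l * (b0 * a - a0 * b),
      W2 a0 b0 (scroll_pt a b l m) = m * a * (b0 * a - a0 * b) &
      W3 a0 b0 (scroll_pt a b l m) = m * b * (b0 * a - a0 * b)].
Proof. by rewrite /W1 /W2 /W3 !mxE /=; split; ring. Qed.

Lemma W_Fr a0 b0 (r : 'rV[algC]_(1 + 1)) :
  [/\ W1 a0 b0 (r *m Fr a0 b0) = 0, W2 a0 b0 (r *m Fr a0 b0) = 0 &
      W3 a0 b0 (r *m Fr a0 b0) = 0].
Proof. by rewrite (r2_eta r) /Fr r2_mul /W1 /W2 /W3 !mxE /=; split; ring. Qed.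

Lemma tcrd_scale A p (c : algC) x : tcrd A p (c *: x) = c * tcrd A p x.
Proof. by have := tcrd_lin A p c 0 x x; rewrite scale0r addr0 mul0r addr0. Qed.

Lemma ucrd_scale A p (c : algC) x : ucrd A p (c *: x) = c *: ucrd A p x.
Proof. by have := ucrd_lin A p c 0 x x; rewrite !scale0r !addr0. Qed.

Lemma sp_scale2 a0 b0 (al a b l m : algC) :
  b0 * (al * m * a * (b0 * a - a0 * b)) - a0 * (al * m * b * (b0 * a - a0 * b)) != 0 ->
  scroll_pt (al * m * a * (b0 * a - a0 * b)) (al * m * b * (b0 * a - a0 * b))
    (al * l * (b0 * a - a0 * b) /
      (b0 * (al * m * a * (b0 * a - a0 * b)) - a0 * (al * m * b * (b0 * a - a0 * b))))
    (1 / (b0 * (al * m * a * (b0 * a - a0 * b)) - a0 * (al * m * b * (b0 * a - a0 * b))))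
  = al *: scroll_pt a b l m.
Proof. exact: sp_scale. Qed.

Lemma ruling_OADP (A : 'M[algC]_(5, 6)) (B : 'M[algC]_(3, 6)) (p : 'rV[algC]_6) (a0 b0 : algC) :
  col_mx A p \in unitmx -> (a0 != 0 \/ b0 != 0) ->
  (forall z, (z <= B)%MS -> exists r : 'rV_(1 + 1), ucrd A p z = r *m Fr a0 b0) ->
  (forall (r : 'rV_(1 + 1)) (t : algC), (((r *m Fr a0 b0) *m A + t *: p)%R <= B)%MS) ->
  OADP (scroll_plane_union A B).
Proof.
move=> hT hab hBF hFB.
set Y := scroll_plane_union A B.
pose Lt := linc A p 0 1.
pose L2 := linc A p (cv5 [:: 0; 0; b0; -a0; 0]) 0.
pose Ld := linc A p (cv5 [:: 0; 0; b0 * b0; - (a0 * b0 + a0 * b0); a0 * a0]) 0.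
have eL2 x : evalv L2 x = W2 a0 b0 (ucrd A p x) by rewrite evalv_lin5 /W2; ring.
have eLd x : evalv Ld x = DW a0 b0 (ucrd A p x) by rewrite evalv_lin5 /DW /W2 /W3; ring.
pose g := Lt * L2 * Ld.
have eg x : evalv g x = tcrd A p x * W2 a0 b0 (ucrd A p x) * DW a0 b0 (ucrd A p x).
  by rewrite /g !evalvM evalv_t eL2 eLd.
pose f := Lt * L2.
have fvan : vanishes_on Y f.
  move=> z [Sz|Pz]; rewrite /f evalvM evalv_t eL2.
    by have [-> _] := scroll_coords hT Sz; rewrite mul0r.
  by have [r ->] := hBF _ Pz; have [_ -> _] := W_Fr a0 b0 r; rewrite mulr0.
have fcoef q w : (restrict_line f q w)`_1 =
    tcrd A p q * W2 a0 b0 (ucrd A p w) + tcrd A p w * W2 a0 b0 (ucrd A p q).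
  by rewrite /f restrict_lineM !restrict_linc coef1_lin2 !evalv_t !eL2.
exists g; split; [|split].
- case: (eqVneq b0 0) => [hb0|hb0].
    have ha0 : a0 != 0 by case: hab => //; rewrite hb0 eqxx.
    pose u0 : 'rV[algC]_5 := \row_(i < 5) nth 0 [:: 0; 0; 0; -1; 1] i.
    apply: (@neq0_point _ (u0 *m A + 1 *: p)).
    have [hu ht] := crd_uniq u0 1 hT.
    rewrite eg hu ht /DW /W2 /W3 !mxE /= hb0.
    have -> : 1 * (0 * 0 - a0 * -1) * (0 * (0 * 0 - a0 * -1) - a0 * (0 * -1 - a0 * 1)) = a0 ^+ 3 by ring.
    by rewrite expf_neq0.
  pose u0 : 'rV[algC]_5 := \row_(i < 5) nth 0 [:: 0; 0; 1; 0; 0] i.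
  apply: (@neq0_point _ (u0 *m A + 1 *: p)).
  have [hu ht] := crd_uniq u0 1 hT.
  rewrite eg hu ht /DW /W2 /W3 !mxE /=.
  have -> : 1 * (b0 * 1 - a0 * 0) * (b0 * (b0 * 1 - a0 * 0) - a0 * (b0 * 0 - a0 * 0)) = b0 ^+ 3 by ring.
  by rewrite expf_neq0.
- exists 3%N; rewrite -dhomogE.
  apply: (@dhomogM _ _ _ 2 _ 1); last exact: linc_homog.
  exact: (@dhomogM _ _ _ 1 _ 1 _ (linc_homog _ _ _ _) (linc_homog _ _ _ _)).
move=> x _ hg.
move: hg; rewrite eg !mulf_eq0 !negb_or => /andP [/andP [ht hw2] hdw].
have hxd := crd_decomp x hT.
set u := ucrd A p x in hw2 hdw hxd.
set t := tcrd A p x in ht hxd.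
pose su := SU a0 b0 u.
pose s := su *m A.
have [us ts] : ucrd A p s = su /\ tcrd A p s = 0.
  by have := crd_uniq su 0 hT; rewrite scale0r addr0.
have [ws1 ws2 ws3] := W_SU hdw.
have [rk hrk] : exists rk : 'rV_(1 + 1), u - su = rk *m Fr a0 b0.
  have [l1 l2 l3] := W_lin a0 b0 1 (-1) u su.
  rewrite scale1r scaleN1r in l1 l2 l3.
  apply: kernelF => //; rewrite ?l1 ?l2 ?l3 -/su ?ws1 ?ws2 ?ws3 mul1r mulN1r subrr //.
pose pi := x - s.
have hpi : pi = (u - su) *m A + t *: p.
  by rewrite /pi {1}hxd mulmxBl addrAC.
have [upi tpi] : ucrd A p pi = u - su /\ tcrd A p pi = t by rewrite hpi; apply: crd_uniq.
have piB : (pi <= B)%MS by rewrite hpi hrk; apply: hFB.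
have sS : on_scroll A s.
  by exists (W2 a0 b0 u), (W3 a0 b0 u), (W1 a0 b0 u / DW a0 b0 u), (1 / DW a0 b0 u).
have W2s : W2 a0 b0 (ucrd A p s) = W2 a0 b0 u by rewrite us ws2.
have W2pi : W2 a0 b0 (ucrd A p pi) = 0.
  by rewrite upi hrk; have [_ -> _] := W_Fr a0 b0 rk.
have sn0 : s != 0.
  apply/eqP => hs0; move: hw2; rewrite -W2s hs0.
  rewrite (_ : (0 : 'rV_6) = 0 *: x); last by rewrite scale0r.
  rewrite ucrd_scale scale0r /W2 !mxE.
  by rewrite !mulr0 subrr eqxx.
have pic c : pi != c *: s.
  by apply/eqP => e; move: ht; rewrite -tpi e tcrd_scale ts mulr0 eqxx.
have hM0 : \rank (col_mx s pi) = 2%N by apply: rank_col2.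
have sec0 : secant_line Y (col_mx s pi).
  split => //; exists s, pi; split.
    by split => //; [apply: sub_colmx1 | apply: sub_colmx2 | left | right].
  split.
    move=> z hz zn0 Yz; have /submxP [D hD] := hz; rewrite colmx_scal in hD.
    set al := D 0 (lshift 1 (0 : 'I_1)) in hD; set be := D 0 (rshift 1 (0 : 'I_1)) in hD.
    case: Yz => [Sz|Pz].
      have [tz _] := scroll_coords hT Sz.
      have hbe : be = 0.
        move: tz; rewrite hD tcrd_lin ts tpi mulr0 add0r => /eqP.
        by rewrite mulf_eq0 (negbTE ht) orbF => /eqP.
      by left; apply: (rank_col1 (c := al)) => //; rewrite hD hbe scale0r addr0.
    have [r hr] := hBF _ Pz.
    have hal : al = 0.
      have [_ e2 _] := W_lin a0 b0 al be (ucrd A p s) (ucrd A p pi).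
      move: e2; rewrite -ucrd_lin -hD hr W2s W2pi mulr0 addr0.
      have [_ -> _] := W_Fr a0 b0 r.
      by move=> /esym/eqP; rewrite mulf_eq0 (negbTE hw2) orbF => /eqP.
    by right; apply: (rank_col1 (c := be)) => //; rewrite hD hal scale0r add0r.
  split; exists f; split => //; rewrite fcoef ts tpi W2pi W2s ?mul0r ?mulr0 ?add0r ?addr0;
    exact: mulf_neq0.
have hxsp : x = s + pi by rewrite /pi addrC subrK.
have huniq M : secant_line Y M -> (x <= M)%MS -> (col_mx s pi == M)%MS.
  move=> hsec hxM; have [hrM _] := hsec.
  suff hsM : (s <= M)%MS.
    apply: rank_sub_eq; last by rewrite hrM hM0.
    rewrite col_mx_sub hsM /=; apply: addmx_sub hxM _.
    by rewrite -scaleN1r; apply: scalemx_sub.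
  have [q1 [q2 [al [be [Y1 Y2 h1 h2 hx]]]]] := secant_span hsec hxM.
  have key qs qp (al' be' : algC) : on_scroll A qs -> (qp <= B)%MS ->
      x = al' *: qs + be' *: qp -> s = al' *: qs.
    move=> Sq Pq hx'.
    have [tq [a [b [l [m eq]]]]] := scroll_coords hT Sq.
    have eqs : qs = scroll_pt a b l m *m A.
      by rewrite (crd_decomp qs hT) tq eq scale0r addr0.
    have [r er] := hBF _ Pq.
    have hu' : u = al' *: scroll_pt a b l m + be' *: (r *m Fr a0 b0).
      by rewrite /u hx' ucrd_lin eq er.
    have [F1 F2 F3] := W_Fr a0 b0 r.
    have [S1 S2 S3] := W_sp a0 b0 a b l m.
    have [L1 L2' L3] := W_lin a0 b0 al' be' (scroll_pt a b l m) (r *m Fr a0 b0).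
    have hw1 : W1 a0 b0 u = al' * l * (b0 * a - a0 * b) by rewrite hu' L1 S1 F1; ring.
    have hw2' : W2 a0 b0 u = al' * m * a * (b0 * a - a0 * b) by rewrite hu' L2' S2 F2; ring.
    have hw3' : W3 a0 b0 u = al' * m * b * (b0 * a - a0 * b) by rewrite hu' L3 S3 F3; ring.
    have hdw' := hdw; rewrite /DW hw2' hw3' in hdw'.
    by rewrite /s /su /SU /DW hw1 hw2' hw3' (@sp_scale2 a0 b0 al' a b l m hdw') eqs scalemxAl.
  case: Y1 => [S1|P1]; case: Y2 => [S2|P2].
  - have [t1 _] := scroll_coords hT S1; have [t2 _] := scroll_coords hT S2.
    by move: ht; rewrite /t hx tcrd_lin t1 t2 !mulr0 addr0 eqxx.
  - by rewrite (key q1 q2 al be S1 P2 hx); apply: scalemx_sub.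
  - by rewrite (key q2 q1 be al S2 P1 (etrans hx (addrC _ _))); apply: scalemx_sub.
  - have [r1 e1] := hBF _ P1; have [r2' e2] := hBF _ P2.
    have [_ L2' _] := W_lin a0 b0 al be (ucrd A p q1) (ucrd A p q2).
    move: hw2; rewrite /u hx ucrd_lin L2' e1 e2.
    have [_ -> _] := W_Fr a0 b0 r1; have [_ -> _] := W_Fr a0 b0 r2'.
    by rewrite !mulr0 addr0 eqxx.
split.
  exists (col_mx s pi); split => //.
  by rewrite hxsp; apply: addmx_sub; [apply: sub_colmx1 | apply: sub_colmx2].
move=> M1 M2 s1 x1 s2 x2.
have /andP [a1 b1] := huniq M1 s1 x1; have /andP [a2 b2] := huniq M2 s2 x2.
by apply/andP; split; [exact: submx_trans b1 a2 | exact: submx_trans b2 a1].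
Qed.

Lemma OADP_not_defective Y : OADP Y -> secant_defective Y -> False.
Proof.
move=> [g1 [g1n0 [_ h1]]] [g2 [g2n0 [_ h2]]].
pose X0 : vpoly := 'X_0.
have eX x : evalv X0 x = x 0 0 by rewrite /evalv mevalXU.
have X0n0 : X0 != 0 by apply: (@neq0_point _ (const_mx 1)); rewrite eX mxE oner_eq0.
have [x hx] := vpoly_nonvanish (mulf_neq0 (mulf_neq0 g1n0 g2n0) X0n0).
move: hx; rewrite !evalvM !mulf_eq0 !negb_or eX => /andP [/andP [hx1 hx2] hx0].
have xn0 : x != 0 by apply: contra hx0 => /eqP ->; rewrite mxE.
have [[M [hsec hxM]] _] := h1 x xn0 hx1.
exact: (h2 x xn0 hx2 M hxM hsec).
Qed.

Theorem proposition3p3 (A : 'M[algC]_(5, 6)) (B : 'M[algC]_(3, 6))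
    (C : 'M[algC]_(2, 6)) :
  row_free A -> \rank B = 3%N -> \rank C = 2%N ->
  \rank (col_mx A B) = 6%N ->
  (forall x : 'rV[algC]_6, (on_scroll A x /\ (x <= B)%MS) <-> (x <= C)%MS) ->
  (OADP (scroll_plane_union A B) <-> is_ruling_line A C) /\
  (secant_defective (scroll_plane_union A B) <-> is_directrix A C).
Proof.
move=> hA hB hC hAB hint.
have [hCB hCA hcap [p [hpB hT]]] := setup hA hB hC hAB hint.
have hsc x : (x <= C)%MS -> on_scroll A x by move/hint => [].
have hcl := classify hA hC hsc.
have rul_O : is_ruling_line A C -> OADP (scroll_plane_union A B).
  move=> [a0 [b0 [hab hCF]]].
  have hCF' : (C == Fr a0 b0 *m A)%MS by rewrite /Fr mul_col_mx.
  have [hBF hFB] := plane_coords hA hT hpB hCB hcap hCF'.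
  exact: ruling_OADP hT hab hBF hFB.
have dir_D : is_directrix A C -> secant_defective (scroll_plane_union A B).
  move=> hCF.
  have hCF' : (C == Fd *m A)%MS by rewrite /Fd mul_col_mx.
  have [hBF _] := plane_coords hA hT hpB hCB hcap hCF'.
  exact: directrix_defective hT hBF.
split; split => //.
- by move=> hO; case: hcl => // hd; exfalso; exact: OADP_not_defective hO (dir_D hd).
- by move=> hD; case: hcl => // hr; exfalso; exact: OADP_not_defective (rul_O hr) hD.
Qed.
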